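(* Every strongly $D$-continuous poset with complementation is pseudo-orthomodular. Every finite pseudo-orthomodular poset is strongly $D$-continuous.
   Context: For $M\subseteq P$, $U(M)$, $L(M)$ are the sets of upper and lower bounds; $U(a,b)=U(\{a,b\})$ etc. For $B,C\subseteq P$, $B\le C$ means $b\le c$ for all $b\in B$, $c\in C$. A poset with complementation is a bounded poset $(P,\le,{}',0,1)$ with antitone involution $'$ ($x\le y\Rightarrow y'\le x'$, $x''=x$) with $L(x,x')=\{0\}$, $U(x,x')=\{1\}$; it is pseudo-orthomodular if $L(U(L(x,y),y'),y)=L(x,y)$ for all $x,y$. It is strongly $D$-continuous if for all $B,C\subseteq P$ with $B\le C$: $\bigwedge_{\mathbf P}\{g\in P\mid g\in C\text{ or } g'\in B\}=0$ if and only if every lower bound of $C$ in $P$ is below every upper bound of $B$ in $P$. *)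

(* Defs.v *)
From Stdlib Require Import List.

Record PosetComp := {
  car :> Type;
  le : car -> car -> Prop;
  comp : car -> car;
  bot : car;
  top : car;
  le_refl : forall x, le x x;
  le_antisym : forall x y, le x y -> le y x -> x = y;
  le_trans : forall x y z, le x y -> le y z -> le x z;
  bot_le : forall x, le bot x;
  le_top : forall x, le x top;
  comp_antitone : forall x y, le x y -> le (comp y) (comp x);
  comp_invol : forall x, comp (comp x) = x;
  comp_L : forall x z, le z x -> le z (comp x) -> z = bot;
  comp_U : forall x z, le x z -> le (comp x) z -> z = top
}.

Section Defs.
Variable P : PosetComp.

Definition Lb (M : P -> Prop) : P -> Prop := fun z => forall m, M m -> le P z m.
Definition Ub (M : P -> Prop) : P -> Prop := fun z => forall m, M m -> le P m z.

Definition pair (a b : P) : P -> Prop := fun z => z = a \/ z = b.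

Definition add1 (M : P -> Prop) (a : P) : P -> Prop := fun z => M z \/ z = a.

Definition set_eq (A B : P -> Prop) : Prop := forall z, A z <-> B z.

Definition is_inf (M : P -> Prop) (a : P) : Prop :=
  Lb M a /\ forall b, Lb M b -> le P b a.

(* L(U(L(x,y), y'), y) = L(x,y) *)
Definition pseudo_orthomodular : Prop :=
  forall x y : P,
    set_eq (Lb (add1 (Ub (add1 (Lb (pair x y)) (comp P y))) y)) (Lb (pair x y)).

Definition strongly_D_continuous : Prop :=
  forall B C : P -> Prop,
    (forall b c, B b -> C c -> le P b c) ->
    (is_inf (fun g => C g \/ B (comp P g)) (bot P) <->
     forall l u, Lb C l -> Ub B u -> le P l u).

Definition finite_poset : Prop := exists l : list P, forall x : P, In x l.
End Defs.

(* Main.v *)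
Require Import Defs.
From Stdlib Require Import List Lia Classical ClassicalEpsilon.

Section Aux.
Variable P : PosetComp.

Lemma cle_swap (a b : P) : le P (comp P a) b -> le P (comp P b) a.
Proof. intro H. apply comp_antitone in H. rewrite comp_invol in H. exact H. Qed.

Lemma lec_swap (a b : P) : le P a (comp P b) -> le P b (comp P a).
Proof. intro H. apply comp_antitone in H. rewrite comp_invol in H. exact H. Qed.

Lemma self_comp (a : P) : le P a (comp P a) -> a = bot P.
Proof. intro H. apply (comp_L P a a (le_refl P a) H). Qed.

Lemma comp_bot : comp P (bot P) = top P.
Proof. apply (comp_U P (bot P)); [apply bot_le | apply le_refl]. Qed.

Lemma SP1 (HP : pseudo_orthomodular P) (x y z : P) :
  le P z y ->
  (forall m, (forall q, le P q x -> le P q y -> le P q m) -> le P (comp P y) m -> le P z m) ->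
  le P z x.
Proof.
  intros zy Hz.
  destruct (HP x y z) as [H1 _].
  assert (Hl : Lb P (pair P x y) z).
  { apply H1. intros m [Hm | ->]; [|exact zy].
    apply Hz.
    - intros q qx qy. apply Hm. left. intros m' [-> | ->]; assumption.
    - apply Hm. right. reflexivity. }
  apply Hl. left. reflexivity.
Qed.

Definition cnt (A : P -> Prop) (l : list P) : nat :=
  length (filter (fun x => if excluded_middle_informative (A x) then false else true) l).

Lemma cnt_le (A B : P -> Prop) (l : list P) :
  (forall x, A x -> B x) -> cnt B l <= cnt A l.
Proof.
  intro HAB. induction l as [|a l IH]; [unfold cnt; simpl; lia|].
  unfold cnt in *; simpl.
  destruct (excluded_middle_informative (B a)); destruct (excluded_middle_informative (A a));
    simpl; try lia.
  exfalso; auto.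
Qed.

Lemma cnt_lt (A B : P -> Prop) (l : list P) (p : P) :
  (forall x, A x -> B x) -> In p l -> ~ A p -> B p -> cnt B l < cnt A l.
Proof.
  intros HAB Hin HnA HB. induction l as [|a l IH]; [destruct Hin|].
  unfold cnt in *; simpl.
  destruct Hin as [-> | Hin].
  - destruct (excluded_middle_informative (B p)); [|contradiction].
    destruct (excluded_middle_informative (A p)); [contradiction|].
    simpl. pose proof (cnt_le A B l HAB). unfold cnt in H. lia.
  - specialize (IH Hin).
    destruct (excluded_middle_informative (B a)); destruct (excluded_middle_informative (A a));
      simpl; try lia.
    exfalso; auto.
Qed.

Definition SPprop (T : P -> Prop) : Prop :=
  forall (S : P -> Prop) (z : P), Lb P T z ->
    (forall w, (forall q, Lb P S q -> Lb P T q -> le P q w) -> Lb P T (comp P w) -> le P z w) ->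
    Lb P S z.

Lemma SP_main (HP : pseudo_orthomodular P) (l : list P) (Hl : forall x, In x l) :
  forall n (T : P -> Prop), cnt (Lb P T) l <= n -> SPprop T.
Proof.
  induction n as [|n IH]; intros T Hn S z Hz Hw;
  (destruct (classic (forall p, Lb P T p)) as [Hall|Hnall];
   [ intros s Hs; apply Hw; [intros q Hq _; apply Hq, Hs | apply Hall] | ]);
  (apply not_all_ex_not in Hnall; destruct Hnall as [p Hp];
   assert (Hex : exists c0, T c0 /\ ~ le P p c0)
     by (apply NNPP; intro Hc; apply Hp; intros t Ht;
         apply NNPP; intro Hpt; apply Hc; exists t; split; assumption);
   destruct Hex as [c0 [Hc0 Hpc0]];
   set (R := Ub P (add1 P (Lb P T) (comp P c0)));
   assert (Ha : forall q, Lb P R q -> le P q c0 -> Lb P T q)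
     by (intros q Hq Hqc t Ht; apply (SP1 HP t c0 q Hqc);
         intros m Hm1 Hm2; apply Hq; intros m0 [Hm0 | ->];
         [apply Hm1; [apply Hm0; exact Ht | apply Hm0; exact Hc0] | exact Hm2]);
   assert (Ha' : forall q, Lb P T q -> Lb P R q)
     by (intros q Hq r Hr; apply Hr; left; exact Hq);
   assert (Hb : Lb P R (comp P c0)) by (intros r Hr; apply Hr; right; reflexivity);
   assert (Hb' : ~ Lb P T (comp P c0))
     by (intro Hc; apply Hpc0; assert (E := self_comp (comp P c0) ltac:(rewrite comp_invol; exact (Hc c0 Hc0)));
         rewrite <- (comp_invol P c0), E, comp_bot; apply le_top);
   assert (Hlt : cnt (Lb P R) l < cnt (Lb P T) l)
     by (apply (cnt_lt _ _ l (comp P c0)); auto)).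
  - lia.
  - apply (IH R ltac:(lia) S z (Ha' z Hz)).
    intros w Hw1 Hw2.
    apply (SP1 HP w c0 z (Hz c0 Hc0)).
    intros m Hm1 Hm2.
    apply Hw.
    + intros q HqS HqT. apply Hm1; [apply Hw1; auto | apply HqT; exact Hc0].
    + apply Ha.
      * intros r Hr. apply cle_swap.
        apply Hm1.
        -- apply cle_swap. apply Hw2. exact Hr.
        -- apply cle_swap. apply Hr. right. reflexivity.
      * apply cle_swap. exact Hm2.
Qed.

End Aux.

Theorem corollary5 :
  (forall P : PosetComp, strongly_D_continuous P -> pseudo_orthomodular P) /\
  (forall P : PosetComp, finite_poset P -> pseudo_orthomodular P ->
     strongly_D_continuous P).
Proof.
  split.
  - intros P HS x y z. split.
    + intro Hz.
      assert (zy : le P z y) by (apply Hz; right; reflexivity).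
      assert (zx : le P z x).
      { set (B := Lb P (pair P x y)).
        set (C := add1 P (Ub P (add1 P (Lb P (pair P x y)) (comp P y))) y).
        assert (HBC : forall b c, B b -> C c -> le P b c).
        { intros b c Hb [Hc | ->].
          - apply Hc. left. exact Hb.
          - apply Hb. right. reflexivity. }
        destruct (HS B C HBC) as [H1 _].
        assert (Hinf : is_inf P (fun g => C g \/ B (comp P g)) (bot P)).
        2:{ apply (H1 Hinf z x). exact Hz. intros b Hb. apply Hb. left. reflexivity. }
        split; [intros m _; apply bot_le |].
        { intros w Hw.
          assert (wy : le P w y) by (apply Hw; left; right; reflexivity).
          assert (Hw' : C (comp P w)).
          { left. intros m [Hm | ->].
            - apply lec_swap. apply Hw. right. unfold B. rewrite comp_invol. exact Hm.
            - apply comp_antitone. exact wy. }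
          assert (E : w = bot P) by (apply self_comp; apply Hw; left; exact Hw').
          rewrite E. apply le_refl. } }
      intros m [-> | ->]; assumption.
    + intros Hz m [Hm | ->].
      * apply Hm. left. exact Hz.
      * apply Hz. right. reflexivity.
  - intros P [l Hl] HP B C HBC. split.
    + intros [_ Hinf] z u Hz Hu.
      assert (HSP := SP_main P HP l Hl _ C (PeanoNat.Nat.le_refl _) (Ub P B) z Hz).
      apply HSP; [|exact Hu].
      intros w Hw1 Hw2.
      assert (E : comp P w = bot P).
      { apply le_antisym; [|apply bot_le].
        apply Hinf. intros g [Hg | Hg].
        - apply Hw2. exact Hg.
        - apply cle_swap. apply Hw1.
          + intros b Hb. apply Hb. exact Hg.
          + intros c Hc. apply HBC; assumption. }
      rewrite <- (comp_invol P w), E, comp_bot. apply le_top.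
    + intros H. split; [intros m _; apply bot_le|].
      intros b Hb.
      assert (E : b = bot P).
      { apply self_comp. apply H.
        - intros c Hc. apply Hb. left. exact Hc.
        - intros b0 Hb0. apply lec_swap. apply Hb. right. rewrite comp_invol. exact Hb0. }
      rewrite E. apply le_refl.
Qed.
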